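(* Let $t$ be a positive even integer. Then $$\sum_{n\geq1} a_t^{\star}(n)\, q^n=t \cdot \frac{q^{2t}\, (-q;q^2)_{\infty}}{1-q^{2t}},$$ and consequently, for every integer $n\ge 1$, $$a_t^{\star}(n)=t\sum_{j\geq 1} sc(n-2tj)=t\sum_{j\geq 1} q^{\star}(n-2tj).$$
   Context: A partition $\lambda=(\lambda_1\ge\dots\ge\lambda_\ell\ge 1)$ of $n$ has $\sum_i\lambda_i=n$; its Young diagram has $\lambda_i$ left-justified cells in row $i$. The conjugate $\lambda'$ is obtained by reflecting the Young diagram in the main diagonal; $\lambda$ is self-conjugate if $\lambda=\lambda'$, and $\mathcal{SC}$ is the set of self-conjugate partitions. The hook length of the cell $(i,j)$ is the number of cells to its right in row $i$ plus the number below it in column $j$ plus $1$; $n_t(\lambda)$ is the number of cells of $\lambda$ with hook length $t$. Define $a_t^{\star}(n)=\sum_{\lambda\in\mathcal{SC},\,\lambda\vdash n} n_t(\lambda)$. $sc(m)$ is the number of self-conjugate partitions of $m$, $q^{\star}(m)$ is the number of partitions of $m$ into distinct odd parts, with $sc(0)=q^\star(0)=1$ and $sc(m)=q^\star(m)=0$ for $m<0$. $(a;q)_\infty=\prod_{j\ge0}(1-aq^j)$. *)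

(* Defs.v *)
From HB Require Import structures.
From mathcomp Require Import all_boot all_order all_algebra.
Set Implicit Arguments. Unset Strict Implicit. Unset Printing Implicit Defensive.
Import Order.TTheory GRing.Theory Num.Theory.

Definition is_partition (s : seq nat) : bool :=
  sorted geq s && all (fun x => 0 < x) s.

Definition pseq (n : nat) (f : {ffun 'I_n -> 'I_n.+1}) : seq nat :=
  [seq (val (f i) : nat) | i <- enum 'I_n & 0 < val (f i)].

(* The duplicate-free list of all partitions of n: every partition of n has
   at most n parts, each at most n, so all of them occur among the pseq f. *)
Definition partitions (n : nat) : seq (seq nat) :=
  undup [seq s <- [seq pseq f | f <- enum {ffun 'I_n -> 'I_n.+1}]
           | is_partition s && (sumn s == n)].

Definition conj_part (s : seq nat) : seq nat :=
  [seq count (fun x => j < x) s | j <- iota 0 (head 0 s)].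

Definition self_conjugate (s : seq nat) : bool := conj_part s == s.

(* Hook length of the cell in row i.+1, column j.+1 (0-indexed i, j):
   arm + leg + 1. *)
Definition hook (s : seq nat) (i j : nat) : nat :=
  (nth 0 s i - j.+1) + (nth 0 (conj_part s) j - i.+1) + 1.

Definition n_hook (t : nat) (s : seq nat) : nat :=
  \sum_(i < size s) \sum_(j < nth 0 s i) (hook s i j == t).

Definition a_star (t n : nat) : nat :=
  \sum_(s <- partitions n | self_conjugate s) n_hook t s.

Definition sc_nat (m : nat) : nat := count self_conjugate (partitions m).
Definition qstar_nat (m : nat) : nat :=
  count (fun s => sorted (fun a b => b < a) s && all odd s) (partitions m).

Definition sc (m : int) : nat := if m is Posz k then sc_nat k else 0.
Definition qstar (m : int) : nat := if m is Posz k then qstar_nat k else 0.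

Local Open Scope ring_scope.

Definition a_star_poly (t N : nat) : {poly int} :=
  \sum_(1 <= n < N.+1) (a_star t n)%:Z *: 'X^n.

(* prod_{0 <= j < N} (1 + q^(2j+1)), agreeing with (-q;q^2)_infty mod q^(N+1) *)
Definition odd_prod_poly (N : nat) : {poly int} :=
  \prod_(j < N) (1 + 'X^(2 * j + 1)).

(* Main.v *)
Require Import Defs.
From mathcomp Require Import all_boot all_order all_algebra.
From mathcomp Require Import zify ring.
Set Implicit Arguments. Unset Strict Implicit. Unset Printing Implicit Defensive.
Import Order.TTheory GRing.Theory Num.Theory.
Lemma mem_partitions n s :
  (s \in partitions n) = (is_partition s && (sumn s == n)).
Proof.
rewrite /partitions mem_undup mem_filter andbC.
case Hs: (is_partition s && (sumn s == n)); last by rewrite andbF.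
rewrite andbT.
case/andP: Hs => /andP [Hsort Hpos] /eqP Hsum.
apply/mapP.
have Hle : forall x, x \in s -> (x <= n)%N.
  move=> x xs; rewrite -Hsum; elim: {Hsort Hpos Hsum} s xs => //= y s IH.
  rewrite inE => /orP [/eqP -> | /IH]; lia.
have Hsize : (size s <= n)%N.
  rewrite -Hsum; elim: {Hsort Hsum Hle} s Hpos => //= y s IH /andP [Hy Hs].
  have := IH Hs; lia.
exists [ffun i : 'I_n => inord (nth 0 s i) : 'I_n.+1]; first by rewrite mem_enum.
rewrite /pseq.
rewrite -filter_map.
set L0 := map _ (enum 'I_n).
have -> : L0 = [seq nth 0 s i | i <- iota 0 n].
  rewrite /L0 -val_enum_ord -map_comp; apply: eq_map => i /=.
  rewrite ffunE inordK //.
  case: (ltnP i (size s)) => Hi; last by rewrite nth_default.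
  by rewrite ltnS Hle // mem_nth.
rewrite -(subnKC Hsize) iotaD map_cat filter_cat.
have -> : [seq nth 0 s i | i <- iota 0 (size s)] = s.
  by rewrite -/(mkseq _ _) mkseq_nth.
rewrite (all_filterP Hpos).
rewrite add0n; set L := filter _ _.
suff -> : L = [::] by rewrite cats0.
rewrite /L; apply/eqP; rewrite -[_ == _]negbK -has_filter; apply/hasPn => x /mapP [i].
by rewrite mem_iota => /andP [Hi _] ->; rewrite nth_default.
Qed.

Lemma uniq_partitions n : uniq (partitions n).
Proof. exact: undup_uniq. Qed.
Fixpoint okD (a : nat) (D : seq nat) : bool :=
  if D is d :: D' then (d < a) && okD d D' else true.
Definition hb (D : seq nat) : nat := if D is d :: _ then d.+1 else 0.
Definition decD (D : seq nat) : bool := okD (hb D) D.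
Fixpoint subs (N : nat) : seq (seq nat) :=
  if N is N'.+1 then subs N' ++ map (cons N') (subs N') else [:: [::]].
Definition wD (D : seq nat) : nat := sumn [seq 2 * a + 1 | a <- D].
Definition addhook (a : nat) (mu : seq nat) : seq nat :=
  a.+1 :: [seq (nth 0 mu k).+1 | k <- iota 0 a].
Fixpoint build (D : seq nat) : seq nat :=
  if D is a :: D' then addhook a (build D') else [::].

Lemma okD_hb a D : okD a D = decD D && (hb D <= a).
Proof.
case: D => [|d D] //=; rewrite /decD /= ltnSn /=.
by rewrite andbC.
Qed.

Lemma okD_le a b D : okD a D -> a <= b -> okD b D.
Proof. rewrite !okD_hb => /andP [-> H] Hab /=; lia. Qed.

Lemma okD_mem a D x : okD a D -> x \in D -> x < a.
Proof.
elim: D a => [|d D IH] a //= /andP [Hd HD]; rewrite inE => /orP [/eqP -> //|].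
move/(IH _ HD); lia.
Qed.

Lemma wD_cons a D : wD (a :: D) = 2 * a + 1 + wD D.
Proof. by []. Qed.

Lemma hb_wD D : hb D <= wD D.
Proof. case: D => [|d D] //=; rewrite /wD /=; lia. Qed.

Lemma decD_okw D : decD D -> okD (wD D) D.
Proof. move=> H; rewrite okD_hb H hb_wD. by []. Qed.

Lemma mem_wD x D : x \in D -> 2 * x + 1 <= wD D.
Proof.
elim: D => [|d D IH] //=; rewrite inE wD_cons => /orP [/eqP ->|/IH]; lia.
Qed.

Lemma mem_subs N D : (D \in subs N) = okD N D.
Proof.
elim: N D => [|N IH] D /=.
  by case: D => [|d D] //=; rewrite inE.
rewrite mem_cat IH; apply/idP/idP.
  case/orP => [H|/mapP [D' HD' ->] /=]; first exact: okD_le H _.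
  by rewrite ltnSn -IH.
case: D => [|d D] //= /andP [Hd HD].
case: (ltngtP d N) => [lt|gt|eq]; [by rewrite HD | lia | ].
apply/orP; right; apply/mapP; exists D; last by rewrite eq.
by rewrite IH -eq.
Qed.

Lemma uniq_subs N : uniq (subs N).
Proof.
elim: N => [|N IH] //=; rewrite cat_uniq IH /=.
rewrite map_inj_uniq; last by move=> x y [].
rewrite IH andbT; apply/hasPn => x /mapP [D _ ->].
by rewrite mem_subs /= ltnn.
Qed.

Lemma nth_map_iota (f : nat -> nat) a k :
  nth 0 [seq f i | i <- iota 0 a] k = if k < a then f k else 0.
Proof.
case: ltnP => H; first by rewrite (nth_map 0) ?size_iota // nth_iota.
by rewrite nth_default // size_map size_iota.
Qed.

Lemma map_nth_iota (mu : seq nat) a : size mu <= a ->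
  [seq nth 0 mu k | k <- iota 0 a] = mu ++ nseq (a - size mu) 0.
Proof.
move=> H; apply: (@eq_from_nth _ 0).
  by rewrite size_map size_iota size_cat size_nseq; lia.
move=> i; rewrite size_map size_iota => Hi.
rewrite nth_map_iota Hi nth_cat nth_nseq.
case: ltnP => // H2; rewrite nth_default //.
by case: ifP.
Qed.

Lemma filter_pos_nseq (mu : seq nat) m : all (fun x => 0 < x) mu ->
  [seq x <- mu ++ nseq m 0 | 0 < x] = mu.
Proof.
move=> H; rewrite filter_cat (all_filterP H).
by elim: m => [|m IH] /=; rewrite ?cats0.
Qed.

Lemma sumn_succ (f : nat -> nat) (s : seq nat) :
  sumn [seq (f k).+1 | k <- s] = size s + sumn [seq f k | k <- s].
Proof. elim: s => //= x s ->; lia. Qed.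

Lemma sumn_nseq0 m : sumn (nseq m 0) = 0.
Proof. by elim: m. Qed.

Lemma sorted_geq_nth (s : seq nat) i j : sorted geq s -> i <= j -> nth 0 s j <= nth 0 s i.
Proof.
move=> Hs Hij; case: (ltnP j (size s)) => Hj; last by rewrite nth_default.
have Htr : transitive geq by move=> x y z /=; lia.
have Hrf : reflexive geq by move=> x /=.
have := sorted_leq_nth Htr Hrf 0 Hs; move=> /(_ i j); apply => //; rewrite ?inE; lia.
Qed.

Lemma sorted_geq_ofnth (s : seq nat) : (forall i, nth 0 s i.+1 <= nth 0 s i) -> sorted geq s.
Proof. by move=> H; apply/(sortedP 0) => i _; apply: H. Qed.

Lemma nth_addhook a mu k :
  nth 0 (addhook a mu) k = if k is k'.+1 then (if k' < a then (nth 0 mu k').+1 else 0) else a.+1.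
Proof. by case: k => [|k] //=; rewrite nth_map_iota. Qed.

Lemma size_addhook a mu : size (addhook a mu) = a.+1.
Proof. by rewrite /= size_map size_iota. Qed.

Lemma size_build D : size (build D) = hb D.
Proof. by case: D => [|d D] //=; rewrite size_map size_iota. Qed.

Lemma head_build D : nth 0 (build D) 0 = hb D.
Proof. by case: D. Qed.

Lemma pos_build D : all (fun x => 0 < x) (build D).
Proof. case: D => [|d D] //=; apply/allP => x /mapP [k _ ->] //. Qed.

Lemma sorted_addhook a mu : sorted geq mu -> nth 0 mu 0 <= a -> sorted geq (addhook a mu).
Proof.
move=> Hs H0; apply: sorted_geq_ofnth => i; rewrite !nth_addhook.
case: i => [|i]; first by case: ifP => // _; lia.
case: ifP => H1; case: ifP => H2 //; try lia.
have := sorted_geq_nth Hs (leqnSn i); lia.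
Qed.

Lemma okD_cons a D : okD a.+1 (a :: D) = okD a D.
Proof. by rewrite /= ltnSn. Qed.

Lemma decD_cons a D : decD (a :: D) = okD a D.
Proof. by rewrite /decD okD_cons. Qed.

Lemma sorted_build D : decD D -> sorted geq (build D).
Proof.
elim: D => [|a D IH] //; rewrite decD_cons okD_hb => /andP [HD Hhb] /=.
apply: sorted_addhook; first exact: IH.
by rewrite head_build.
Qed.

Lemma sumn_addhook a mu : size mu <= a -> sumn (addhook a mu) = 2 * a + 1 + sumn mu.
Proof.
move=> H; rewrite /= sumn_succ size_iota map_nth_iota // sumn_cat sumn_nseq0; lia.
Qed.

Lemma sumn_build D : decD D -> sumn (build D) = wD D.
Proof.
elim: D => [|a D IH] //; rewrite decD_cons okD_hb => /andP [HD Hhb] /=.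
change (sumn (addhook a (build D)) = wD (a :: D)).
by rewrite sumn_addhook ?size_build // IH.
Qed.

Lemma sorted_le_head (s : seq nat) x : sorted geq s -> x \in s -> x <= nth 0 s 0.
Proof.
move=> Hs /(nthP 0) [i Hi <-]; exact: sorted_geq_nth Hs (leq0n i).
Qed.

Lemma conj_nth (mu : seq nat) k : sorted geq mu ->
  nth 0 (conj_part mu) k = count (fun x => k < x) mu.
Proof.
move=> Hs; rewrite /conj_part nth_map_iota -nth0.
case: ltnP => // Hk; apply/esym/eqP; rewrite -leqn0 leqNgt -has_count.
apply/hasPn => x Hx; have := sorted_le_head Hs Hx; lia.
Qed.

Lemma size_conj mu : size (conj_part mu) = nth 0 mu 0.
Proof. by rewrite /conj_part size_map size_iota nth0. Qed.

Lemma conj_addhook a mu : sorted geq mu -> size mu <= a ->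
  conj_part (addhook a mu) = addhook a (conj_part mu).
Proof.
move=> Hs Hsz; apply: (@eq_from_nth _ 0).
  by rewrite size_conj size_addhook.
move=> i; rewrite size_conj nth_addhook => Hi.
rewrite {1}/conj_part (_ : head 0 (addhook a mu) = a.+1) // nth_map_iota Hi nth_addhook.
case: i Hi => [|k] Hk.
  apply/eqP; rewrite -{1}(size_addhook a mu) -all_count; apply/allP => x.
  by rewrite /addhook inE => /orP [/eqP -> | /mapP [k _ ->]].
rewrite ltnS in Hk; rewrite Hk conj_nth //.
rewrite /addhook [count _ _]/= ltnS Hk add1n count_map; congr S.
rewrite -(count_map (nth 0 mu) (fun x => k < x)) map_nth_iota // count_cat.
by rewrite count_nseq /= mul0n addn0.
Qed.

Lemma conj_build D : decD D -> conj_part (build D) = build D.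
Proof.
elim: D => [|a D IH] //; rewrite decD_cons okD_hb => /andP [HD Hhb] /=.
change (conj_part (addhook a (build D)) = addhook a (build D)).
by rewrite conj_addhook ?IH ?sorted_build ?size_build.
Qed.
Lemma addhook_inj a a' mu mu' : size mu <= a -> size mu' <= a' ->
  all (fun x => 0 < x) mu -> all (fun x => 0 < x) mu' ->
  addhook a mu = addhook a' mu' -> a = a' /\ mu = mu'.
Proof.
move=> Hs Hs' Hp Hp' E.
have Ea : a = a' by case: E.
subst a'; split => //.
have E2 : [seq nth 0 mu k | k <- iota 0 a] = [seq nth 0 mu' k | k <- iota 0 a].
  apply/eq_in_map => k; rewrite mem_iota add0n => /andP [_ Hk].
  have := congr1 (fun l => nth 0 l k.+1) E.
  by rewrite !nth_addhook Hk => [[]].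
move: E2; rewrite !map_nth_iota // => E2.
by rewrite -(filter_pos_nseq (a - size mu) Hp) E2 filter_pos_nseq.
Qed.

Lemma build_inj D D' : decD D -> decD D' -> build D = build D' -> D = D'.
Proof.
elim: D D' => [|a D IH] [|a' D'] //=.
rewrite !decD_cons !okD_hb => /andP [HD Hb] /andP [HD' Hb'] E.
have [Ea Em] := addhook_inj (mu := build D) (mu' := build D')
   (a := a) (a' := a') ltac:(by rewrite size_build) ltac:(by rewrite size_build)
   (pos_build D) (pos_build D') E.
by rewrite Ea (IH D').
Qed.

Lemma pos_conj mu : all (fun x => 0 < x) (conj_part mu).
Proof.
apply/allP => x /mapP [j]; rewrite mem_iota add0n => /andP [_ Hj] ->.
rewrite -has_count; apply/hasP; exists (head 0 mu) => //.
by case: mu Hj => //= y s _; rewrite inE eqxx.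
Qed.

Lemma split_sorted (L : seq nat) : sorted geq L ->
  L = [seq x <- L | 0 < x] ++ nseq (size L - size [seq x <- L | 0 < x]) 0.
Proof.
elim: L => [|x L IH] //= Hs.
have HL : sorted geq L by move: Hs; case: L {IH} => //= y L /andP [].
case: x Hs => [|x] Hs /=.
  have H0 : forall y, y \in L -> y = 0.
    move=> y Hy; have := @sorted_le_head (0 :: L) y Hs ltac:(by rewrite inE Hy orbT).
    rewrite /=; lia.
  have -> : [seq x <- L | 0 < x] = [::].
    apply/eqP; rewrite -[_ == _]negbK -has_filter; apply/hasPn => y /H0 ->. by [].
  rewrite /=; congr cons.
  apply: (@eq_from_nth _ 0); rewrite ?size_nseq // => i Hi.
  by rewrite nth_nseq Hi; apply: H0; apply: mem_nth.
by rewrite {1}(IH HL) subSS.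
Qed.

Lemma nth_filter_pos (L : seq nat) k : sorted geq L ->
  nth 0 [seq x <- L | 0 < x] k = nth 0 L k.
Proof.
move=> Hs; rewrite {2}(split_sorted Hs) nth_cat.
case: ltnP => // H; rewrite nth_nseq nth_default //.
by case: ifP.
Qed.

Lemma sc_surj n s : sumn s <= n -> is_partition s -> self_conjugate s ->
  exists D, decD D /\ s = build D.
Proof.
elim: n s => [|n IH] s.
  case: s => [|x s] /=; first by exists [::].
  move=> Hs /andP [_ /andP [Hx _]] _; move: Hs Hx => /=; lia.
case: s => [|x s']; first by exists [::].
move=> Hsum /andP [Hsort Hpos] /eqP Hsc.
have Hsz : size (x :: s') = x by rewrite -{1}Hsc size_conj.
have Hx : 0 < x by case/andP: Hpos.
set a := x.-1.
have Hxa : x = a.+1 by rewrite /a; lia.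
have Hs'a : size s' = a by move: Hsz => /= ; lia.
have Hs'sort : sorted geq s' by move: Hsort => /= /path_sorted.
have Hs'pos : all (fun x => 0 < x) s' by case/andP: Hpos.
set L := [seq (nth 0 s' k).-1 | k <- iota 0 a].
have HLsort : sorted geq L.
  apply: sorted_geq_ofnth => i; rewrite /L !nth_map_iota.
  case: ifP => H1; case: ifP => H2 //; try lia.
  have := sorted_geq_nth Hs'sort (leqnSn i); lia.
set mu := [seq y <- L | 0 < y].
have Hmunth : forall k, nth 0 mu k = nth 0 L k by move=> k; apply: nth_filter_pos.
have Hmusort : sorted geq mu.
  by apply: sorted_filter => //; move=> p q r /=; lia.
have Hmupos : all (fun x => 0 < x) mu by apply: filter_all.
have Hmusz : size mu <= a.
  by rewrite /mu size_filter (leq_trans (count_size _ _)) // size_map size_iota.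
have Hs'E : s' = [seq (nth 0 mu k).+1 | k <- iota 0 a].
  apply: (@eq_from_nth _ 0); rewrite ?size_map ?size_iota // => k Hk.
  rewrite nth_map_iota -Hs'a Hk Hmunth /L nth_map_iota -Hs'a Hk.
  have : 0 < nth 0 s' k by apply: (allP Hs'pos); apply: mem_nth.
  lia.
have HsE : x :: s' = addhook a mu by rewrite Hs'E Hxa.
have Hmuhead : nth 0 mu 0 <= a.
  rewrite Hmunth /L nth_map_iota.
  case: ifP => // H0.
  have := sorted_geq_nth Hsort (leq0n 1); rewrite /=; lia.
have Hmusc : conj_part mu = mu.
  have E := Hsc; rewrite HsE conj_addhook // in E.
  have Hcsz : size (conj_part mu) <= a by rewrite size_conj.
  by have [_ H] := addhook_inj Hcsz Hmusz (pos_conj mu) Hmupos E.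
have Hmusum : sumn mu <= n.
  move: Hsum; rewrite HsE sumn_addhook //; lia.
have [D [HD HmuD]] := IH mu Hmusum ltac:(by rewrite /is_partition Hmusort Hmupos)
  ltac:(by rewrite /self_conjugate Hmusc).
exists (a :: D); split; last by rewrite HsE HmuD.
by rewrite decD_cons okD_hb HD /= -size_build -HmuD.
Qed.
Lemma n_hook_nat t s : n_hook t s =
  \sum_(0 <= i < size s) \sum_(0 <= j < nth 0 s i)
     ((nth 0 s i - j.+1) + (nth 0 (conj_part s) j - i.+1) + 1 == t).
Proof.
rewrite /n_hook big_mkord; apply: eq_bigr => i _.
by rewrite big_mkord.
Qed.

Lemma n_hook_addhook t a mu : ~~ odd t -> sorted geq mu -> size mu <= a ->
  nth 0 mu 0 <= a -> conj_part mu = mu ->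
  n_hook t (addhook a mu) =
  n_hook t mu + 2 * \sum_(0 <= k < a) (nth 0 mu k + (a - k) == t).
Proof.
move=> Ht Hs Hsz H0 Hc.
have Hcl : conj_part (addhook a mu) = addhook a mu by rewrite conj_addhook // Hc.
rewrite !n_hook_nat Hcl Hc size_addhook big_nat_recl //.
rewrite {1}nth_addhook big_nat_recl //.
have -> : (nth 0 (addhook a mu) 0 - 1 + (nth 0 (addhook a mu) 0 - 1) + 1 == t) = false.
  rewrite nth_addhook; apply/negbTE/eqP => E; move: Ht; rewrite -E.
  rewrite subSS subn0 (_ : a + a + 1 = (a.*2).+1); last by rewrite -addnn addn1.
  by rewrite /= odd_double.
rewrite add0n.
have E1 : \sum_(0 <= i < a)
     (nth 0 (addhook a mu) 0 - i.+2 + (nth 0 (addhook a mu) i.+1 - 1) + 1 == t)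
   = \sum_(0 <= k < a) (nth 0 mu k + (a - k) == t).
  apply: eq_big_nat => i /andP [_ Hi]; rewrite !nth_addhook Hi.
  by apply/eqP/eqP; lia.
have E2 : \sum_(0 <= i < a)
     \sum_(0 <= j < nth 0 (addhook a mu) i.+1)
        (nth 0 (addhook a mu) i.+1 - j.+1 + (nth 0 (addhook a mu) j - i.+2) + 1 == t)
   = \sum_(0 <= k < a) (nth 0 mu k + (a - k) == t) +
     \sum_(0 <= i < a) \sum_(0 <= j < nth 0 mu i)
        (nth 0 mu i - j.+1 + (nth 0 mu j - i.+1) + 1 == t).
  rewrite -big_split; apply: eq_big_nat => i /andP [_ Hi].
  rewrite {1}nth_addhook Hi big_nat_recl // nth_addhook Hi.
  congr addn.
    rewrite nth_addhook; apply/eqP/eqP; lia.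
  apply: eq_big_nat => l /andP [_ Hl].
  have Hla : l < a.
    have := sorted_geq_nth Hs (leq0n i); lia.
  by rewrite nth_addhook Hla.
rewrite E1 E2.
have Z : \sum_(size mu <= i < a) \sum_(0 <= j < nth 0 mu i)
        (nth 0 mu i - j.+1 + (nth 0 mu j - i.+1) + 1 == t) = 0.
  rewrite big_nat_cond big1 // => i /andP [/andP [Hi _] _].
  by rewrite nth_default // big_geq.
have Z' : \sum_(0 <= i < a) \sum_(0 <= j < nth 0 mu i)
        (nth 0 mu i - j.+1 + (nth 0 mu j - i.+1) + 1 == t) =
        \sum_(0 <= i < size mu) \sum_(0 <= j < nth 0 mu i)
        (nth 0 mu i - j.+1 + (nth 0 mu j - i.+1) + 1 == t).
  by rewrite (@big_cat_nat _ _ _ (size mu) 0 a) //= Z addn0.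
rewrite Z'; lia.
Qed.
Lemma cnt_tail T n : forall m, m <= n ->
  \sum_(m <= k < n) (n - k == T) = ((0 < T) && (T <= n - m)).
Proof.
elim: n => [|n IH] m Hm.
  have -> : m = 0 by lia.
  by rewrite big_geq //; lia.
case: (ltnP n m) => H.
  have -> : m = n.+1 by lia.
  by rewrite big_geq //; lia.
rewrite big_nat_recl //.
have -> : \sum_(m <= i < n) (n.+1 - i.+1 == T) = \sum_(m <= i < n) (n - i == T).
  by apply: eq_big_nat => i _; rewrite subSS.
rewrite IH //; lia.
Qed.

Lemma arith1 (a d T : nat) (m1 m2 : bool) : d < a -> a - d <= T ->
  (m1 -> T - a.+1 < d) -> (m2 -> a - T < d) ->
  (d.+1 + (a - 0) == T) +
  ((((d < T - (a - d)) && m1) + ((0 < T - (a - d)) && (T - (a - d) <= d) && ~~ m2)) +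
   (0 < T <= a - d.+1)) =
  (a < T) && ((T - a.+1 == d) || m1) + (0 < T <= a) && ~~ ((a - T == d) || m2).
Proof. move=> H1 H2 H3 H4.
have B1 : (d < T - (a - d)) = (a < T) by apply/idP/idP; lia.
have B2 : (0 < T - (a - d)) && (T - (a - d) <= d) = (a - d < T) && (T <= a) by apply/idP/idP; lia.
rewrite B1 B2 subn0.
case: (ltnP a T) => HaT.
  case: m1 H3 => H3; [have {}H3 := H3 isT | clear H3];
  case: m2 H4 => H4; [have {}H4 := H4 isT | clear H4 | have {}H4 := H4 isT | clear H4]; lia.
case: m1 H3 => H3; [have {}H3 := H3 isT | clear H3];
case: m2 H4 => H4; [have {}H4 := H4 isT | clear H4 | have {}H4 := H4 isT | clear H4]; lia.
Qed.

Lemma arith2 (a d T : nat) (m1 m2 : bool) : d < a -> T < a - d ->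
  (m1 -> T - a.+1 < d) -> (m2 -> a - T < d) ->
  (d.+1 + (a - 0) == T) + (0 + (0 < T <= a - d.+1)) =
  (a < T) && ((T - a.+1 == d) || m1) + (0 < T <= a) && ~~ ((a - T == d) || m2).
Proof. move=> H1 H2 H3 H4.
rewrite (_ : a < T = false); last lia.
rewrite (_ : a - T == d = false); last lia.
rewrite subn0 add0n andFb /=.
case: m2 H4 => H4; [have {}H4 := H4 isT | clear H4]; lia.
Qed.

Lemma cnt_build D : forall a T, okD a D ->
  \sum_(0 <= k < a) (nth 0 (build D) k + (a - k) == T) =
  ((a < T) && (T - a.+1 \in D)) + ((0 < T) && (T <= a) && (a - T \notin D)).
Proof.
elim: D => [|d D IH] a T.
  move=> _ /=.
  have -> : \sum_(0 <= k < a) (nth 0 [::] k + (a - k) == T) = \sum_(0 <= k < a) (a - k == T).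
    by apply: eq_big_nat => k _; rewrite nth_nil.
  rewrite cnt_tail // in_nil; lia.
move=> /= /andP [Hda HD].
change (build D) with (build D) .
rewrite big_ltn; last lia.
rewrite (@big_cat_nat _ _ _ d.+1 1 a) //.
rewrite big_add1 /=.
have Etail : \sum_(d.+1 <= i < a) (nth 0 (addhook d (build D)) i + (a - i) == T)
           = \sum_(d.+1 <= i < a) (a - i == T).
  apply: eq_big_nat => i /andP [Hi _]; rewrite nth_addhook.
  case: i Hi => [|i] Hi //; rewrite ltnNge (_ : d <= i) //; lia.
rewrite Etail cnt_tail // ?nth_addhook.
have Hmid : \sum_(0 <= i < d) (nth 0 (addhook d (build D)) i.+1 + (a - i.+1) == T)
   = if a - d <= T then \sum_(0 <= i < d) (nth 0 (build D) i + (d - i) == T - (a - d)) else 0.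
  case: ifP => HT.
    apply: eq_big_nat => i /andP [_ Hi]; rewrite nth_addhook Hi.
    apply/eqP/eqP; lia.
  rewrite big_nat_cond big1 // => i /andP [/andP [_ Hi] _].
  rewrite nth_addhook Hi; apply/eqP; lia.
rewrite Hmid.
have Hmem : forall x, x \in D -> x < d by move=> x; apply: okD_mem.
rewrite !inE.
case: ifP => HT.
  rewrite IH //.
  have E3 : (T - (a - d) - d.+1) = T - a.+1 by lia.
  have E4 : d - (T - (a - d)) = a - T by lia.
  rewrite E3 E4.
  apply: arith1 => //; apply: Hmem.
apply: arith2 => //; try apply: Hmem; lia.
Qed.
Definition cond (t a : nat) (D : seq nat) : nat :=
  ((a < t) && (t - a.+1 \in D)) + ((t <= a) && (a - t \notin D)).

Lemma nhook_build_cons t a D : ~~ odd t -> 0 < t -> okD a D ->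
  n_hook t (build (a :: D)) = n_hook t (build D) + 2 * cond t a D.
Proof.
move=> Ht Ht0; rewrite okD_hb => /andP [HD Hb].
change (build (a :: D)) with (addhook a (build D)).
rewrite n_hook_addhook ?sorted_build ?size_build ?head_build ?conj_build //.
rewrite cnt_build; last by rewrite okD_hb HD Hb.
by rewrite /cond Ht0.
Qed.

Lemma okD_decD a D : okD a D -> decD D.
Proof. by rewrite okD_hb => /andP []. Qed.

Lemma filt_subs_perm N M i : i <= N -> i <= M ->
  perm_eq [seq D <- subs N | wD D == i] [seq D <- subs M | wD D == i].
Proof.
move=> HN HM; apply: uniq_perm; rewrite ?filter_uniq ?uniq_subs // => D.
rewrite !mem_filter !mem_subs.
case E: (wD D == i) => //=; move/eqP: E => E.
apply/idP/idP => /okD_decD/decD_okw; rewrite E => H; exact: okD_le H _.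
Qed.

Lemma sc_perm n : perm_eq [seq s <- partitions n | self_conjugate s]
  [seq build D | D <- [seq D <- subs n | wD D == n]].
Proof.
apply: uniq_perm.
- by rewrite filter_uniq // uniq_partitions.
- rewrite map_inj_in_uniq ?filter_uniq ?uniq_subs //.
  move=> D D'; rewrite !mem_filter !mem_subs => /andP [_ HD] /andP [_ HD'].
  exact: build_inj (okD_decD HD) (okD_decD HD').
move=> s; rewrite mem_filter mem_partitions; apply/idP/idP.
  case/andP => Hsc /andP [Hp /eqP Hs].
  have [D [HD Es]] := sc_surj (leqnn _) Hp Hsc.
  apply/mapP; exists D => //.
  have Hw : wD D = n by rewrite -Hs Es sumn_build.
  by rewrite mem_filter mem_subs Hw eqxx /= -Hw decD_okw.
case/mapP => D; rewrite mem_filter mem_subs => /andP [/eqP Hw HD] ->.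
have HD' := okD_decD HD.
by rewrite /self_conjugate conj_build // eqxx /is_partition sorted_build // pos_build
  sumn_build // Hw eqxx.
Qed.

Lemma a_star_D t n : a_star t n = \sum_(D <- subs n | wD D == n) n_hook t (build D).
Proof.
rewrite /a_star -big_filter (perm_big _ (sc_perm n)) big_map.
by rewrite big_filter.
Qed.

Lemma sc_nat_D n : sc_nat n = count (fun D => wD D == n) (subs n).
Proof.
by rewrite /sc_nat -size_filter (perm_size (sc_perm n)) size_map size_filter.
Qed.

Definition oddify (D : seq nat) : seq nat := [seq 2 * a + 1 | a <- D].

Lemma okD_sorted a D : okD a D -> sorted (fun x y => y < x) D.
Proof.
elim: D a => [|d D IH] a //= /andP [Hd HD].
have := IH _ HD; case: D {IH} HD => //= e D /andP [He _] ->; by rewrite He.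
Qed.

Lemma half_okD s : forall a, sorted (fun x y => y < x) s -> all odd s ->
  all (fun x => x./2 < a) s -> okD a [seq x./2 | x <- s].
Proof.
elim: s => [|x s IH] a //= Hs /andP [Hx Ho] /andP [Ha _].
rewrite Ha /=; apply: IH; first exact: path_sorted Hs.
  exact: Ho.
have Htr : transitive (fun x y : nat => y < x) by move=> p q r /=; lia.
have := order_path_min Htr Hs.
move=> /allP Hall; apply/allP => y Hy.
have Hyx := Hall y Hy; have Hyo := allP Ho y Hy.
have := odd_double_half x; have := odd_double_half y.
rewrite Hx Hyo /=; lia.
Qed.

Lemma qs_perm n : perm_eq
  [seq s <- partitions n | sorted (fun a b => b < a) s && all odd s]
  [seq oddify D | D <- [seq D <- subs n | wD D == n]].
Proof.
apply: uniq_perm.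
- by rewrite filter_uniq // uniq_partitions.
- rewrite map_inj_uniq ?filter_uniq ?uniq_subs //.
  by apply: inj_map => x y; lia.
move=> s; rewrite mem_filter mem_partitions; apply/idP/idP.
  case/andP => /andP [Hsrt Hodd] /andP [Hp /eqP Hs].
  apply/mapP; exists [seq x./2 | x <- s].
    rewrite mem_filter mem_subs.
    have Hw : wD [seq x./2 | x <- s] = n.
      rewrite -Hs /wD -map_comp; congr sumn.
      rewrite -[RHS]map_id; apply/eq_in_map => x Hx /=.
      have := odd_double_half x; rewrite (allP Hodd x Hx) /=; lia.
    rewrite Hw eqxx /=; apply: half_okD => //.
    apply/allP => x Hx.
    have Hxn : x <= n.
      rewrite -Hs; elim: {Hsrt Hodd Hp Hs Hw} s Hx => //= y s IH.
      rewrite inE => /orP [/eqP ->| /IH]; lia.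
    have := odd_double_half x; rewrite (allP Hodd x Hx) /=; lia.
  rewrite /oddify -map_comp -[LHS]map_id; apply/eq_in_map => x Hx /=.
  have := odd_double_half x; rewrite (allP Hodd x Hx) /=; lia.
case/mapP => D; rewrite mem_filter mem_subs => /andP [/eqP Hw HD] ->.
have Hsrt := okD_sorted HD.
apply/andP; split.
  apply/andP; split.
    by apply: homo_sorted Hsrt => x y /=; lia.
  by apply/allP => x /mapP [a _ ->]; rewrite addn1 /= oddM.
rewrite /is_partition; apply/andP; split; last by rewrite -Hw.
apply/andP; split.
  by apply: homo_sorted Hsrt => x y /=; lia.
by apply/allP => x /mapP [a _ ->]; lia.
Qed.

Lemma qstar_sc_nat n : qstar_nat n = sc_nat n.
Proof.
rewrite /qstar_nat sc_nat_D -size_filter (perm_size (qs_perm n)) size_map.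
by rewrite size_filter.
Qed.
Local Open Scope ring_scope.

Definition PP (N : nat) : {poly int} := \sum_(D <- subs N) 'X^(wD D).
Definition QQ (N m : nat) : {poly int} := \sum_(D <- subs N | m \in D) 'X^(wD D).
Definition FF (t N : nat) : {poly int} := \sum_(D <- subs N) 'X^(wD D) *+ n_hook t (build D).
Definition CC (t N : nat) : {poly int} := \sum_(D <- subs N) 'X^(wD D) *+ cond t N D.

Lemma PP_S N : PP N.+1 = (1 + 'X^(2 * N + 1)) * PP N.
Proof.
rewrite /PP /= big_cat big_map /= mulrDl mul1r mulr_sumr; congr (_ + _).
by apply: eq_bigr => D _; rewrite wD_cons exprD.
Qed.

Lemma QQ_S N m : QQ N.+1 m = QQ N m + 'X^(2 * N + 1) * (if m == N then PP N else QQ N m).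
Proof.
rewrite /QQ /= big_cat big_map /=; congr (_ + _).
case: eqP => [->|Hm].
  rewrite /PP mulr_sumr; apply: eq_big => D; first by rewrite inE eqxx.
  by rewrite wD_cons exprD.
rewrite mulr_sumr; apply: eq_big => D; first by rewrite inE; case: eqP.
by rewrite wD_cons exprD.
Qed.

Lemma QQ_ge N m : (N <= m)%N -> QQ N m = 0.
Proof.
move=> H; rewrite /QQ big_seq_cond big_pred0 // => D.
apply/negbTE/andP => [[HD Hm]]; move: HD; rewrite mem_subs => HD.
have := okD_mem HD Hm; lia.
Qed.

Lemma PQ N m : (m < N)%N -> 'X^(2 * m + 1) * PP N = (1 + 'X^(2 * m + 1)) * QQ N m.
Proof.
elim: N => [//|N IH] Hm.
rewrite PP_S QQ_S; case: eqP => [->|Hne].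
  rewrite QQ_ge //; ring.
have Hm' : (m < N)%N by lia.
transitivity ((1 + 'X^(2 * N + 1)) * ('X^(2 * m + 1) * PP N)); first ring.
rewrite IH //; ring.
Qed.

Lemma FF_S t N : ~~ odd t -> (0 < t)%N ->
  FF t N.+1 = FF t N + 'X^(2 * N + 1) * (FF t N + 2%:R * CC t N).
Proof.
move=> Ht Ht0.
rewrite /FF /= big_cat big_map /=; congr (_ + _).
rewrite /CC mulrDr !mulr_sumr -big_split /=.
apply: eq_big_seq => D; rewrite mem_subs => HD.
rewrite nhook_build_cons // wD_cons exprD.
rewrite mulrnDr mulrnA; ring.
Qed.

Lemma CC_lt t N : (N < t)%N -> CC t N = QQ N (t - N.+1).
Proof.
move=> H; rewrite /CC /QQ [RHS]big_mkcond /=; apply: eq_bigr => D _.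
rewrite /cond H (_ : (t <= N)%N = false) /=; last lia.
by rewrite addn0 mulrb.
Qed.

Lemma CC_ge t N : (t <= N)%N -> CC t N = PP N - QQ N (N - t).
Proof.
move=> H.
have E : PP N = QQ N (N - t) + CC t N.
  rewrite /CC /QQ /PP [X in _ = X + _]big_mkcond -big_split /=; apply: eq_bigr => D _.
  rewrite /cond H (_ : (N < t)%N = false) /=; last lia.
  by case: ((N - t)%N \in D); rewrite /= ?mulr0n ?mulr1n ?addr0 ?add0r.
rewrite E; ring.
Qed.
Lemma FF0 t : FF t 0 = 0.
Proof. by rewrite /FF /= big_cons big_nil /n_hook big_ord0 mulr0n addr0. Qed.

Lemma phase1 t h N : t = (2 * h)%N -> ~~ odd t -> (0 < t)%N -> (N <= t)%N ->
  (1 - 'X^(2 * t)) * FF t N =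
  2%:R * 'X^(2 * t) * (\sum_(h <= k < N) (PP N - QQ N k) - \sum_(t - N <= m < h) QQ N m).
Proof.
move=> Eth Ht Ht0; elim: N => [|N IH] HN.
  rewrite FF0 !big_geq ?subn0 //; [ring | lia].
have HNt : (N < t)%N by lia.
have IH' := IH (ltnW HNt).
rewrite FF_S // CC_lt //.
set y : {poly int} := 'X^(2 * N + 1).
set z : {poly int} := 'X^(2 * t).
case: (ltnP N h) => HNh.
  rewrite QQ_ge; last lia.
  have E1 : \sum_(h <= k < N) (PP N - QQ N k) = 0 by rewrite big_geq //; lia.
  have E2 : \sum_(t - N <= k < h) QQ N k = 0 by rewrite big_geq //; lia.
  have E3 : \sum_(h <= k < N.+1) (PP N.+1 - QQ N.+1 k) = 0 by rewrite big_geq //; lia.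
  have E4 : \sum_(t - N.+1 <= k < h) QQ N.+1 k = 0 by rewrite big_geq //; lia.
  rewrite E3 E4; rewrite E1 E2 in IH'.
  transitivity ((1 + y) * ((1 - z) * FF t N)); first ring.
  rewrite IH'; ring.
set m0 := (t - N.+1)%N.
have Hm0N : (m0 < N)%N by rewrite /m0; lia.
have Hm0h : (m0 < h)%N by rewrite /m0; lia.
rewrite big_nat_recr //= (@big_ltn _ _ _ m0 h) //.
have Em : m0.+1 = (t - N)%N by rewrite /m0; lia.
rewrite Em.
have E1 : \sum_(h <= k < N) (PP N.+1 - QQ N.+1 k) = (1 + y) * \sum_(h <= k < N) (PP N - QQ N k).
  rewrite mulr_sumr; apply: eq_big_nat => k /andP [_ Hk].
  rewrite PP_S QQ_S (_ : (k == N) = false) /=; [rewrite /y; ring | apply/negbTE; lia].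
have E2 : \sum_(t - N <= k < h) QQ N.+1 k = (1 + y) * \sum_(t - N <= k < h) QQ N k.
  rewrite mulr_sumr; apply: eq_big_nat => k /andP [_ Hk].
  rewrite QQ_S (_ : (k == N) = false) /=; [rewrite /y; ring | apply/negbTE; lia].
have E3 : QQ N.+1 m0 = (1 + y) * QQ N m0.
  rewrite QQ_S (_ : (m0 == N) = false) /=; [rewrite /y; ring | apply/negbTE; lia].
have E4 : QQ N.+1 N = y * PP N by rewrite QQ_S eqxx QQ_ge // add0r.
rewrite E1 E2 E3 E4 PP_S -/y.
set w : {poly int} := 'X^(2 * m0 + 1).
have Ez : z = w * y by rewrite /z /w /y -exprD; congr (_ ^+ _); rewrite /m0; lia.
have HPQ : w * PP N = (1 + w) * QQ N m0 by rewrite /w PQ.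
move: IH'; rewrite -/z => IH'.
set F := FF t N in IH' *; set S1 := \sum_(h <= k < N) (PP N - QQ N k) in IH' *.
set S2 := \sum_(t - N <= k < h) QQ N k in IH' *.
set P := PP N in HPQ *; set Q0 := QQ N m0 in HPQ *.
apply/eqP; rewrite -subr_eq0; apply/eqP.
transitivity ((1 + y) * ((1 - z) * F - 2%:R * z * (S1 - S2)) + 2%:R * y * ((1 + w) * Q0 - w * P)).
  rewrite Ez; ring.
by rewrite IH' HPQ !subrr !mulr0 addr0.
Qed.
Lemma phase2_base t h : t = (2 * h)%N -> ~~ odd t -> (0 < t)%N ->
  (1 - 'X^(2 * t)) * FF t t =
  t%:R * 'X^(2 * t) * PP t - 2%:R * 'X^(2 * t) * \sum_(t - t <= m < t) QQ t m.
Proof.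
move=> Eth Ht Ht0.
rewrite (@phase1 t h t) // subnn.
rewrite (@big_cat_nat _ _ _ h 0 t) /=; [|lia|lia].
rewrite sumrB sumr_const_nat (_ : (t - h)%N = h); last lia.
rewrite Eth natrM; ring.
Qed.

Lemma phase2 t h N : t = (2 * h)%N -> ~~ odd t -> (0 < t)%N -> (t <= N)%N ->
  (1 - 'X^(2 * t)) * FF t N =
  t%:R * 'X^(2 * t) * PP N - 2%:R * 'X^(2 * t) * \sum_(N - t <= m < N) QQ N m.
Proof.
move=> Eth Ht Ht0; elim: N => [|N IH] HN; first lia.
case: (ltngtP t N.+1) => HtN; last by rewrite -HtN; apply: (phase2_base Eth).
  2: lia.
have IH' := IH ltac:(lia).
rewrite FF_S // CC_ge; last lia.
set y : {poly int} := 'X^(2 * N + 1).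
set z : {poly int} := 'X^(2 * t).
set m0 := (N - t)%N.
have Hm0N : (m0 < N)%N by rewrite /m0; lia.
rewrite big_nat_recr /=; last lia.
rewrite (@big_ltn _ _ _ m0 N) // in IH'.
have Em : m0.+1 = (N.+1 - t)%N by rewrite /m0; lia.
rewrite Em in IH'.
have E2 : \sum_(N.+1 - t <= k < N) QQ N.+1 k = (1 + y) * \sum_(N.+1 - t <= k < N) QQ N k.
  rewrite mulr_sumr; apply: eq_big_nat => k /andP [_ Hk].
  rewrite QQ_S (_ : (k == N) = false) /=; [rewrite /y; ring | apply/negbTE; lia].
have E4 : QQ N.+1 N = y * PP N by rewrite QQ_S eqxx QQ_ge // add0r.
rewrite E2 E4 PP_S -/y.
set w : {poly int} := 'X^(2 * m0 + 1).
have Ey : y = z * w by rewrite /z /w /y -exprD; congr (_ ^+ _); rewrite /m0; lia.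
have HPQ : w * PP N = (1 + w) * QQ N m0 by rewrite /w PQ.
move: IH'; rewrite -/z => IH'.
set F := FF t N in IH' *; set R := \sum_(N.+1 - t <= k < N) QQ N k in IH' *.
set P := PP N in HPQ *; set Q0 := QQ N m0 in HPQ *.
apply/eqP; rewrite -subr_eq0; apply/eqP.
transitivity ((1 + y) * ((1 - z) * F - (t%:R * z * P - 2%:R * z * (Q0 + R))) - 2%:R * z * ((1 + w) * Q0 - w * P)).
  rewrite Ey; ring.
by rewrite IH' HPQ !subrr !mulr0 subr0.
Qed.
Lemma coef_QQ_small N m i : (i < 2 * m + 1)%N -> (QQ N m)`_i = 0.
Proof.
move=> Hi; rewrite /QQ coef_sum big1 // => D HmD; rewrite coefXn.
have Hw := mem_wD HmD; case: eqP => // E; move: Hw; rewrite -E; lia.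
Qed.

Lemma trunc_main t h N i : t = (2 * h)%N -> ~~ odd t -> (0 < t)%N -> (t <= N)%N ->
  (i <= N)%N ->
  ((1 - 'X^(2 * t)) * FF t N)`_i = (t%:R * 'X^(2 * t) * PP N)`_i.
Proof.
move=> Eth Ht Ht0 HtN HiN; rewrite (phase2 Eth) // coefB.
suff -> : (2%:R * 'X^(2 * t) * \sum_(N - t <= m < N) QQ N m)`_i = 0 by rewrite subr0.
rewrite -mulrA mulr_natl coefMn coefXnM; case: ifP => // Hi.
rewrite coef_sum big_nat_cond big1 ?mul0rn // => m /andP [/andP [Hm _] _].
apply: coef_QQ_small; lia.
Qed.

Lemma coef_FF t N i : (FF t N)`_i = (\sum_(D <- subs N | wD D == i) n_hook t (build D))%:R.
Proof.
rewrite /FF coef_sum natr_sum [RHS]big_mkcond /=; apply: eq_bigr => D _.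
rewrite coefMn coefXn eq_sym; case: eqP => _; by rewrite ?mulr1n ?mul0rn ?natrM ?mul1r // mulr_natl.
Qed.

Lemma coef_PP N i : (PP N)`_i = (count (fun D => wD D == i) (subs N))%:R.
Proof.
rewrite /PP coef_sum -sum1_count natr_sum [RHS]big_mkcond /=; apply: eq_bigr => D _.
by rewrite coefXn eq_sym; case: eqP.
Qed.

Lemma coef_FF_a t N i : (i <= N)%N -> (FF t N)`_i = (a_star t i)%:R.
Proof.
move=> H; rewrite coef_FF a_star_D -!(big_filter (subs _)).
by rewrite (perm_big _ (filt_subs_perm H (leqnn i))).
Qed.

Lemma coef_PP_sc N i : (i <= N)%N -> (PP N)`_i = (sc_nat i)%:R.
Proof.
move=> H; rewrite coef_PP sc_nat_D -!size_filter.
by rewrite (perm_size (filt_subs_perm H (leqnn i))).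
Qed.

Lemma recur t i : ~~ odd t -> (0 < t)%N ->
  a_star t i = if (2 * t <= i)%N then (a_star t (i - 2 * t) + t * sc_nat (i - 2 * t))%N else 0%N.
Proof.
move=> Ht Ht0.
set h := t./2.
have Eth : t = (2 * h)%N by have := odd_double_half t; rewrite (negbTE Ht) /= -/h; lia.
have := @trunc_main t h (maxn i t) i Eth Ht Ht0 (leq_maxr _ _) (leq_maxl _ _).
rewrite mulrBl mul1r coefB coefXnM -mulrA mulr_natl coefMn coefXnM.
rewrite coef_FF_a ?leq_maxl //.
case: ltnP => Hi.
  rewrite subr0 mul0rn => /eqP; rewrite pnatr_eq0 => /eqP ->.
  by [].
rewrite coef_FF_a ?coef_PP_sc; try lia.
Qed.
Lemma a_star0 t : a_star t 0 = 0%N.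
Proof. by rewrite a_star_D /= big_cons big_nil /= /n_hook big_ord0. Qed.

Lemma coef_astar_poly t N j :
  (a_star_poly t N)`_j = if (j <= N)%N then (a_star t j)%:R else 0.
Proof.
rewrite /a_star_poly coef_sum.
have -> : \sum_(1 <= i < N.+1) ((a_star t i)%:Z *: 'X^i)`_j
        = \sum_(1 <= i < N.+1 | i == j) (a_star t i)%:Z.
  rewrite [RHS]big_mkcond /=; apply: eq_bigr => i _.
  rewrite coefZ coefXn; case: (altP (i =P j)) => [->|Hne]; first by rewrite eqxx mulr1.
  by rewrite eq_sym (negbTE Hne) mulr0.
rewrite big_nat1_eq.
case: j => [|j].
  by rewrite /= a_star0 natz.
case: ifP => H1; case: ifP => H2; rewrite ?natz //; lia.
Qed.

Lemma odd_prod_PP N : odd_prod_poly N = PP N.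
Proof.
elim: N => [|N IH].
  by rewrite /odd_prod_poly big_ord0 /PP /= big_cons big_nil addr0 expr0.
by rewrite /odd_prod_poly big_ord_recr /= -/(odd_prod_poly N) IH PP_S mulrC.
Qed.

Lemma sc_sub n m : sc (n%:Z - m%:Z) = if (m <= n)%N then sc_nat (n - m) else 0%N.
Proof.
case E: (n%:Z - m%:Z) => [k|k] /=; case: leqP => H //; try lia.
by have -> : k = (n - m)%N by lia.
Qed.

Lemma qstar_sc x : qstar x = sc x.
Proof. by case: x => [k|k] //=; rewrite qstar_sc_nat. Qed.

Lemma sum_shift t n : (0 < t)%N -> (2 * t <= n)%N ->
  (\sum_(1 <= j < n.+1) sc (n%:Z - (2 * t * j)%:Z) =
   sc_nat (n - 2 * t) + \sum_(1 <= j < (n - 2 * t).+1) sc ((n - 2 * t)%:Z - (2 * t * j)%:Z))%N.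
Proof.
move=> Ht H.
rewrite big_ltn; last lia.
rewrite sc_sub muln1 H; congr addn.
rewrite big_add1 /=.
have -> : \sum_(1 <= i < n) sc (n%:Z - (2 * t * i.+1)%:Z)
        = \sum_(1 <= i < n) sc ((n - 2 * t)%:Z - (2 * t * i)%:Z).
  apply: eq_bigr => j _; rewrite !sc_sub.
  case: leqP => H1; case: leqP => H2; try lia.
  by congr sc_nat; lia.
rewrite (@big_cat_nat _ _ _ (n - 2 * t).+1 1 n) /=; [|lia|lia].
have -> : \sum_((n - 2 * t).+1 <= i < n) sc ((n - 2 * t)%:Z - (2 * t * i)%:Z) = 0%N.
  rewrite big_nat_cond big1 // => j /andP [/andP [Hj _] _].
  have Hj2 : (j <= t * j)%N := leq_pmull j Ht.
  rewrite sc_sub; case: leqP => // H2; lia.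
by rewrite Monoid.simpm.
Qed.

Lemma part2 t n : ~~ odd t -> (0 < t)%N ->
  a_star t n = (t * \sum_(1 <= j < n.+1) sc (n%:Z - (2 * t * j)%:Z))%N.
Proof.
move=> Ht Ht0; elim/ltn_ind: n => n IH.
rewrite recur //; case: leqP => H.
  rewrite IH; last lia.
  by rewrite [in RHS]sum_shift // mulnDr addnC.
rewrite big_nat_cond big1 ?muln0 // => j /andP [/andP [Hj _] _].
have Hj2 : (1 <= j)%N by [].
have Hj3 : (t <= t * j)%N := leq_pmulr t Hj2.
rewrite sc_sub; case: leqP => // H2; lia.
Qed.

Theorem theorem1p2 (t : nat) (t_pos : (0 < t)%N) (t_even : ~~ odd t) :
  (forall N : nat,
     take_poly N.+1 ((1 - 'X^(2 * t)) * a_star_poly t N)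
     = take_poly N.+1 (t%:R *: ('X^(2 * t) * odd_prod_poly N)))
  /\
  (forall n : nat, (1 <= n)%N ->
     a_star t n = (t * \sum_(1 <= j < n.+1) sc (n%:Z - (2 * t * j)%:Z))%N
     /\ a_star t n = (t * \sum_(1 <= j < n.+1) qstar (n%:Z - (2 * t * j)%:Z))%N).
Proof.
split.
  move=> N; apply/polyP => i; rewrite !coef_take_poly; case: ifP => // HiN.
  rewrite mulrBl mul1r coefB coefXnM coefZ coefXnM !coef_astar_poly odd_prod_PP.
  rewrite (_ : (i <= N)%N = true); last lia.
  rewrite (recur i t_even t_pos).
  case: ltnP => Hi; first by rewrite subr0 mulr0; lia.
  rewrite (_ : (i - 2 * t <= N)%N = true); last lia.
  rewrite coef_PP_sc; last lia.
  lia.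
move=> n _; have E := part2 n t_even t_pos; split => //.
rewrite E; congr muln; apply: eq_bigr => j _; by rewrite qstar_sc.
Qed.
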